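(* Let $F(B_1,\dots,B_n)$ be a flower-polyhedron in $\mathbb{E}^d$ which is reduced along its boundary. Then $\ker_{\mathrm{s}}\big(F(B_1,\dots,B_n)\big)=\bigcap_{i=1}^n B_i$.
   Context: A lattice polynomial $F(x_1,\dots,x_n)$ is an expression built from the variables $x_1,\dots,x_n$ using the binary operations $\cap$ and $\cup$ with brackets indicating the order of evaluation, in which each variable occurs exactly once. A flower-polyhedron in $\mathbb{E}^d$ is a set $F(B_1,\dots,B_n)$ where $F$ is a lattice polynomial and $B_1,\dots,B_n$ are closed unit balls in $\mathbb{E}^d$. It is reduced along its boundary if the boundary of $F(B_1,\dots,B_n)$ intersects the boundary of each $B_i$ in a $(d-1)$-dimensional set. For $x,y\in\mathbb{E}^d$ the spindle $[x,y]_{\mathrm{s}}$ is the intersection of all closed unit balls containing $x$ and $y$ if $|x-y|\le2$, and $\mathbb{E}^d$ otherwise. For $A\subseteq\mathbb{E}^d$, $p\in A$: $\operatorname{st}_{\mathrm{s}}(p,A)=\{q\in A:[p,q]_{\mathrm{s}}\subseteq A\}$, and $\ker_{\mathrm{s}}A=\{p\in A:\operatorname{st}_{\mathrm{s}}(p,A)=A\}$. *)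

(* Defs.v *)
(* Euclidean space E^d is 'rV[R]_d, R : realType. *)
From HB Require Import structures.
From mathcomp Require Import all_boot all_order all_algebra.
From mathcomp Require Import all_classical all_reals all_analysis.
Set Implicit Arguments. Unset Strict Implicit. Unset Printing Implicit Defensive.
Import Order.TTheory GRing.Theory Num.Theory.
Import numFieldNormedType.Exports.
Local Open Scope classical_set_scope.
Local Open Scope ring_scope.

Section Defs.
Variables (R : realType) (d : nat).
Notation V := 'rV[R]_d.

Definition edist (x y : V) : R := Num.sqrt (\sum_(i < d) (x ord0 i - y ord0 i) ^+ 2).

Definition cball (c : V) : set V := [set x | edist c x <= 1].

Definition bd (A : set V) : set V := closure A `\` interior A.

Definition spindle (x y : V) : set V :=
  if edist x y <= 2 then \bigcap_(c in [set c | cball c x /\ cball c y]) cball c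
  else setT.

Definition spindle_star (p : V) (A : set V) : set V :=
  [set q | A q /\ spindle p q `<=` A].

Definition spindle_kernel (A : set V) : set V :=
  [set p | A p /\ spindle_star p A = A].

(* a subset S of the sphere bd (cball c) is (d-1)-dimensional:
   it contains a nonempty relatively open piece of the sphere *)
Definition full_dim_on_sphere (c : V) (S : set V) : Prop :=
  exists x r, bd (cball c) x /\ 0 < r /\
    [set y | bd (cball c) y /\ edist x y < r] `<=` S.
End Defs.

Inductive lpoly (n : nat) : Type :=
| LVar of 'I_n
| LCap of lpoly n & lpoly n
| LCup of lpoly n & lpoly n.

Fixpoint lvars n (F : lpoly n) : seq 'I_n :=
  match F with
  | LVar i => [:: i]
  | LCap F1 F2 => lvars F1 ++ lvars F2
  | LCup F1 F2 => lvars F1 ++ lvars F2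
  end.

(* each variable occurs exactly once *)
Definition lattice_polynomial n (F : lpoly n) : Prop :=
  perm_eq (lvars F) (enum 'I_n).

Fixpoint leval n T (F : lpoly n) (B : 'I_n -> set T) : set T :=
  match F with
  | LVar i => B i
  | LCap F1 F2 => leval F1 B `&` leval F2 B
  | LCup F1 F2 => leval F1 B `|` leval F2 B
  end.

Definition flower_polyhedron (R : realType) d n (F : lpoly n) (c : 'I_n -> 'rV[R]_d)
  : set 'rV[R]_d := leval F (fun i => cball (c i)).

Definition reduced_along_boundary (R : realType) d n (F : lpoly n)
  (c : 'I_n -> 'rV[R]_d) : Prop :=
  forall i, full_dim_on_sphere (c i)
    (bd (flower_polyhedron F c) `&` bd (cball (c i))).

(* Main.v *)
Require Import Defs.
From HB Require Import structures.
From mathcomp Require Import all_boot all_order all_algebra.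
From mathcomp Require Import all_classical all_reals all_analysis.
From mathcomp Require Import ring lra.
Set Implicit Arguments. Unset Strict Implicit. Unset Printing Implicit Defensive.
Import Order.TTheory GRing.Theory Num.Theory.
Import numFieldNormedType.Exports.
Local Open Scope classical_set_scope.
Local Open Scope ring_scope.

Section S.
Variables (R : realType) (d : nat).
Notation V := 'rV[R]_d.

Lemma ball_coord (x y : V) (e : R) : 0 < e ->
  ball x e y <-> (forall k, `|x ord0 k - y ord0 k| < e).
Proof.
move=> e0; rewrite mx_norm_ball /ball_ /= [X in X < _]/Num.Def.normr /= mx_normrE.
split.
- move=> H k; apply: le_lt_trans H.
  have -> : x ord0 k - y ord0 k = (x - y) ord0 k by rewrite !mxE.
  exact: (le_bigmax _ (fun ij => `|(x - y) ij.1 ij.2|) (ord0, k)).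
- move=> H; apply/bigmax_ltP; split => // -[i k] _ /=.
  by rewrite (ord1 i) !mxE.
Qed.

Lemma nbhs_coord (x : V) (A : set V) :
  nbhs x A <-> exists e : R, 0 < e /\ forall y : V, (forall k, `|x ord0 k - y ord0 k| < e) -> A y.
Proof.
split.
- move=> /nbhs_ballP [e e0 H]; exists e; split=> // y Hy; apply: H.
  by apply/ball_coord.
- move=> [e [e0 H]]; apply/nbhs_ballP; exists e => // y /ball_coord Hy; exact: H (Hy e0).
Qed.

Definition dot (u v : V) : R := \sum_k u ord0 k * v ord0 k.

Lemma dotC (u v : V) : dot u v = dot v u.
Proof. by apply: eq_bigr => k _; rewrite mulrC. Qed.
Lemma dotDl (u w v : V) : dot (u + w) v = dot u v + dot w v.
Proof. by rewrite /dot -big_split; apply: eq_bigr => k _; rewrite mxE mulrDl. Qed.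
Lemma dotNl (u v : V) : dot (- u) v = - dot u v.
Proof. by rewrite /dot -sumrN; apply: eq_bigr => k _; rewrite mxE mulNr. Qed.
Lemma dotZl (a : R) (u v : V) : dot (a *: u) v = a * dot u v.
Proof. by rewrite /dot mulr_sumr; apply: eq_bigr => k _; rewrite mxE mulrA. Qed.
Lemma dotDr (u w v : V) : dot v (u + w) = dot v u + dot v w.
Proof. by rewrite !(dotC v) dotDl. Qed.
Lemma dotNr (u v : V) : dot v (- u) = - dot v u.
Proof. by rewrite !(dotC v) dotNl. Qed.
Lemma dotZr (a : R) (u v : V) : dot v (a *: u) = a * dot v u.
Proof. by rewrite !(dotC v) dotZl. Qed.
Lemma dot_ge0 (u : V) : 0 <= dot u u.
Proof. by apply: sumr_ge0 => k _; rewrite -expr2 sqr_ge0. Qed.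
Lemma dot_eq0 (u : V) : dot u u = 0 -> u = 0.
Proof.
move=> H; apply/rowP => k; rewrite mxE.
have hp : forall k : 'I_d, xpredT k -> 0 <= u ord0 k * u ord0 k.
  by move=> j _; rewrite -expr2 sqr_ge0.
have := @psumr_eq0P _ _ xpredT (fun k => u ord0 k * u ord0 k) hp H k isT.
by move/eqP; rewrite mulf_eq0 orbb => /eqP.
Qed.

Lemma coord_le (u : V) k : u ord0 k ^+ 2 <= dot u u.
Proof.
rewrite /dot (bigD1 k) //= -expr2 lerDl; apply: sumr_ge0 => j _.
by rewrite -expr2 sqr_ge0.
Qed.

Lemma dot_le_coord (u : V) (e : R) : (forall k, `|u ord0 k| <= e) -> dot u u <= d%:R * e ^+ 2.
Proof.
move=> H; rewrite /dot (@le_trans _ _ (\sum_(k < d) e ^+ 2)) //.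
  apply: ler_sum => k _; have := H k; rewrite ler_norml => /andP[h1 h2].
  nra.
by rewrite sumr_const card_ord mulr_natl.
Qed.

Lemma dot_delta k (v : V) : dot (delta_mx ord0 k) v = v ord0 k.
Proof.
rewrite /dot (bigD1 k) //= big1 ?addr0; first by rewrite mxE !eqxx mul1r.
by move=> j /negbTE jk; rewrite mxE jk andbF mul0r.
Qed.

Definition n2 (u : V) := dot u u.

Lemma edistE (x y : V) : Defs.edist x y = Num.sqrt (n2 (x - y)).
Proof.
by rewrite /Defs.edist /n2 /dot; congr Num.sqrt; apply: eq_bigr => k _; rewrite !mxE expr2.
Qed.

Lemma n2_ge0 (u : V) : 0 <= n2 u. Proof. exact: dot_ge0. Qed.

Lemma cballP (c x : V) : cball c x <-> n2 (c - x) <= 1.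
Proof.
rewrite /cball /= edistE -{1}(sqrtr1 R) ler_sqrt //.
Qed.

Lemma edist_ltP (x y : V) (r : R) : 0 < r -> (Defs.edist x y < r <-> n2 (x - y) < r ^+ 2).
Proof.
move=> r0; rewrite edistE -{1}(ger0_norm (ltW r0)) -sqrtr_sqr ltr_sqrt //.
by rewrite exprn_gt0.
Qed.

Lemma n2N (x y : V) : n2 (x - y) = n2 (y - x).
Proof. by rewrite -opprB /n2 dotNl dotNr opprK. Qed.

Lemma n2D (a b : V) : n2 (a + b) = n2 a + 2 * dot a b + n2 b.
Proof. rewrite /n2 dotDl !dotDr (dotC b a); ring. Qed.
Lemma n2B (a b : V) : n2 (a - b) = n2 a - 2 * dot a b + n2 b.
Proof. rewrite /n2 dotDl !dotDr !dotNl !dotNr (dotC b a); ring. Qed.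

Lemma par (a b : V) : n2 (a + b) <= 2 * n2 a + 2 * n2 b.
Proof. have := n2_ge0 (a - b); rewrite n2B n2D; lra. Qed.

Lemma n2_0 : n2 0 = 0.
Proof. by rewrite /n2 /dot big1 // => k _; rewrite mxE mul0r. Qed.

Lemma euc_nbhs (q : V) (r : R) : 0 < r -> nbhs q [set y | n2 (q - y) < r].
Proof.
move=> r0; apply/nbhs_coord.
pose e := Num.min 1 (r / (d%:R + 1)).
have e1 : e <= 1 by rewrite ge_min lexx.
have e2 : e <= r / (d%:R + 1) by rewrite ge_min lexx orbT.
have d0 : 0 <= (d%:R : R) by [].
have e0 : 0 < e by rewrite lt_min ltr01 divr_gt0 // ltr_wpDl.
exists e; split => // y Hy.
have hk : forall k, `|(q - y) ord0 k| <= e.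
  by move=> k; rewrite !mxE; apply: ltW; exact: Hy.
have := @dot_le_coord (q - y) e hk.
rewrite -/(n2 _) => H.
have h3 : e * (d%:R + 1) <= r.
  by rewrite -ler_pdivlMr ?ltr_wpDl.
have h4 : (d%:R : R) * e ^+ 2 <= d%:R * e.
  by apply: ler_wpM2l => //; rewrite expr2 ger_pMr.
rewrite /=; lra.
Qed.

Lemma nbhs_euc (q : V) (A : set V) : nbhs q A -> exists r, 0 < r /\ forall y, n2 (q - y) < r -> A y.
Proof.
move=> /nbhs_coord [e [e0 H]]; exists (e ^+ 2); split; first exact: exprn_gt0.
move=> y Hy; apply: H => k.
have := coord_le (q - y) k; rewrite !mxE -/(n2 _) => Hk.
have ha := normr_ge0 (q ord0 k - y ord0 k).
have hb : `|q ord0 k - y ord0 k| ^+ 2 < e ^+ 2.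
  by rewrite real_normK ?num_real //; exact: le_lt_trans Hk Hy.
nra.
Qed.

Lemma n2_cont (b : V) (eps : R) : 0 < eps ->
  exists r, 0 < r /\ forall a, n2 a < r -> `|n2 (a + b) - n2 b| < eps.
Proof.
move=> e0.
pose t := eps / (2 * (n2 b + 1)).
have nb := n2_ge0 b.
have t0 : 0 < t by rewrite divr_gt0 // mulr_gt0 // ltr_wpDl.
have tE : t * (2 * (n2 b + 1)) = eps by rewrite /t mulfVK // gt_eqF // mulr_gt0 // ltr_wpDl.
pose r := Num.min (eps / 4) (t * eps / 4).
have r1 : r <= eps / 4 by rewrite ge_min lexx.
have r2 : r <= t * eps / 4 by rewrite ge_min lexx orbT.
have r0 : 0 < r by rewrite lt_min !divr_gt0 // mulr_gt0.
exists r; split => // a Ha.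
have na := n2_ge0 a.
rewrite n2D.
have h1 := n2_ge0 (a - t *: b); rewrite n2B /n2 !dotZr !dotZl -/(n2 b) in h1.
have h2 := n2_ge0 (a + t *: b); rewrite n2D /n2 !dotZr !dotZl -/(n2 b) in h2.
rewrite -/(n2 a) in h1 h2.
rewrite addrK ltr_norml.
have a1 : t * n2 a <= t * (eps / 4).
  by apply: ler_wpM2l; [exact: ltW | apply: ltW; apply: lt_le_trans Ha r1].
have a2 : n2 a < t * eps / 4 by apply: lt_le_trans Ha r2.
have a3 : t ^+ 2 * n2 b = t * eps / 2 - t ^+ 2 by rewrite -tE; field.
have t2 : 0 < t ^+ 2 by rewrite exprn_gt0.
have t3 : 0 <= t * n2 a by rewrite mulr_ge0 // ltW.
have t4 : 0 < t * eps by rewrite mulr_gt0.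
apply/andP; split.
- rewrite -(ltr_pM2l t0); lra.
- rewrite -(ltr_pM2l t0); lra.
Qed.

Ltac dexp := rewrite /n2 ?(dotDl, dotDr, dotNl, dotNr, dotZl, dotZr).

Lemma subadd (x y c : V) : (x - y) + (c - x) = c - y.
Proof. by rewrite addrC addrA subrK. Qed.

Lemma bd_sphere (c x : V) : bd (cball c) x -> n2 (c - x) = 1.
Proof.
case=> Hcl Hint.
case: (ltgtP (n2 (c - x)) 1) => // H.
- exfalso; apply: Hint.
  have e0 : 0 < 1 - n2 (c - x) by rewrite subr_gt0.
  have [r [r0 Hr]] := n2_cont (c - x) e0.
  apply: filterS (euc_nbhs x r0) => y /= Hy; apply/cballP.
  have := Hr _ Hy; rewrite subadd ltr_norml => /andP[_ h]; lra.
- exfalso.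
  have e0 : 0 < n2 (c - x) - 1 by rewrite subr_gt0.
  have [r [r0 Hr]] := n2_cont (c - x) e0.
  have [y [/cballP Hy1 Hy2]] := Hcl _ (euc_nbhs x r0).
  have := Hr _ Hy2; rewrite subadd ltr_norml => /andP[h _]; lra.
Qed.

Lemma sphere_bd (c x : V) : n2 (c - x) = 1 -> bd (cball c) x.
Proof.
move=> H; split; first by apply: subset_closure; apply/cballP; rewrite H.
move=> /nbhs_euc [r [r0 Hr]].
pose t := Num.min 1 (r / 2).
have t1 : t <= 1 by rewrite ge_min lexx.
have t2 : t <= r / 2 by rewrite ge_min lexx orbT.
have t0 : 0 < t by rewrite lt_min ltr01 divr_gt0.
have := Hr (x + t *: (x - c)).
have e1 : n2 (x - (x + t *: (x - c))) = t ^+ 2 * n2 (c - x).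
  rewrite /n2; dexp; rewrite (dotC c x); ring.
have e2 : n2 (c - (x + t *: (x - c))) = (1 + t) ^+ 2 * n2 (c - x).
  rewrite /n2; dexp; rewrite (dotC c x); ring.
rewrite e1 H mulr1 => /(_ ltac:(nra)) /cballP; rewrite e2 H; nra.
Qed.

Lemma minl (a b : R) : Num.min a b <= a. Proof. by rewrite ge_min lexx. Qed.
Lemma minr' (a b : R) : Num.min a b <= b. Proof. by rewrite ge_min lexx orbT. Qed.

Definition Loc (q : V) (P A : set V) (r : R) :=
  (forall y, n2 (q - y) < r -> ~ A y) \/ (forall y, n2 (q - y) < r -> A y) \/
  (forall y, n2 (q - y) < r -> (A y <-> P y)).

Lemma Loc_mono q P A r r' : r' <= r -> Loc q P A r -> Loc q P A r'.
Proof.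
move=> le [H|[H|H]]; [left|right;left|right;right] => y Hy; apply: H;
  exact: lt_le_trans Hy le.
Qed.

Lemma loc_ball (q c' : V) (P : set V) : cball c' = P \/ n2 (c' - q) <> 1 ->
  exists r, 0 < r /\ Loc q P (cball c') r.
Proof.
case=> [<-|H].
  by exists 1; split => //; right; right.
have e0 : 0 < `|n2 (c' - q) - 1| by rewrite normr_gt0 subr_eq0; apply/eqP.
have [r [r0 Hr]] := n2_cont (c' - q) e0.
exists r; split => //.
case: (ltgtP (n2 (c' - q)) 1) => h; last by [].
- right; left => y Hy; apply/cballP; have := Hr _ Hy; rewrite subadd.
  rewrite ltr_norml ltr0_norm ?subr_lt0 // => /andP[_ h2]; lra.
- left => y Hy /cballP; have := Hr _ Hy; rewrite subadd.
  rewrite ltr_norml gtr0_norm ?subr_gt0 // => /andP[h2 _]; lra.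
Qed.

Lemma loc_F n (F : lpoly n) (B : 'I_n -> set V) q P :
  (forall j, exists r, 0 < r /\ Loc q P (B j) r) ->
  exists r, 0 < r /\ Loc q P (leval F B) r.
Proof.
move=> HB; elim: F => [j|F1 IH1 F2 IH2|F1 IH1 F2 IH2] //=.
- have [r1 [r10 H1]] := IH1; have [r2 [r20 H2]] := IH2.
  exists (Num.min r1 r2); split; first by rewrite lt_min r10.
  have {H1}H1 := Loc_mono (minl r1 r2) H1.
  have {H2}H2 := Loc_mono (minr' r1 r2) H2.
  move: (Num.min r1 r2) H1 H2 => r [H1|[H1|H1]] [H2|[H2|H2]];
   first [ left => y Hy [A1 A2]; move: (H1 y Hy) (H2 y Hy); tauto
         | right; left => y Hy; move: (H1 y Hy) (H2 y Hy); split; tauto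
         | right; right => y Hy; move: (H1 y Hy) (H2 y Hy); rewrite /setI /=; tauto ].
- have [r1 [r10 H1]] := IH1; have [r2 [r20 H2]] := IH2.
  exists (Num.min r1 r2); split; first by rewrite lt_min r10.
  have {H1}H1 := Loc_mono (minl r1 r2) H1.
  have {H2}H2 := Loc_mono (minr' r1 r2) H2.
  move: (Num.min r1 r2) H1 H2 => r [H1|[H1|H1]] [H2|[H2|H2]];
   first [ left => y Hy [A1|A2]; move: (H1 y Hy) (H2 y Hy); tauto
         | right; left => y Hy; move: (H1 y Hy) (H2 y Hy); rewrite /setU /=; tauto
         | right; right => y Hy; move: (H1 y Hy) (H2 y Hy); rewrite /setU /=; tauto ].
Qed.

Lemma maxl (a b : R) : a <= Num.max a b. Proof. by rewrite le_max lexx. Qed.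
Lemma maxr' (a b : R) : b <= Num.max a b. Proof. by rewrite le_max lexx orbT. Qed.

Lemma escape0 (u w : V) (rho : R) : n2 u = 1 -> 1 < n2 (u - w) -> 0 < rho ->
  exists v, n2 v < rho /\ 1 < n2 (u - v) /\
    forall z, n2 (z - w) <= 1 -> n2 z <= 1 -> n2 (z - v) <= 1.
Proof.
move=> hu huw r0.
have E1 : forall z (l k : R), n2 (z - (l *: w - (l * k) *: u)) =
   n2 z - 2 * l * dot z w + 2 * l * k * dot z u +
   l ^+ 2 * (n2 w - 2 * k * dot u w + k ^+ 2).
  move=> z l k; rewrite /n2; dexp; rewrite -/(n2 u) hu (dotC w u) (dotC w z) (dotC u z).
  ring.
have E2 : forall (l k : R), n2 (l *: w - (l * k) *: u) =
   l ^+ 2 * (n2 w - 2 * k * dot u w + k ^+ 2).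
  move=> l k; rewrite /n2; dexp; rewrite -/(n2 u) hu (dotC w u); ring.
have E3 : forall (l k : R), n2 (u - (l *: w - (l * k) *: u)) =
   1 - 2 * (l * dot u w - l * k) + l ^+ 2 * (n2 w - 2 * k * dot u w + k ^+ 2).
  move=> l k; rewrite /n2; dexp; rewrite -/(n2 u) hu (dotC w u); ring.
have E4 : forall z, n2 (z - w) = n2 z - 2 * dot z w + n2 w by move=> z; rewrite n2B.
have E5 : forall z, n2 (z - u) = n2 z - 2 * dot z u + 1 by move=> z; rewrite n2B hu.
rewrite n2B hu in huw.
have cs := n2_ge0 (w - (dot u w) *: u).
rewrite n2B /n2 !dotZr !dotZl -/(n2 u) hu (dotC w u) in cs.
rewrite -/(n2 w) in cs huw.
have b0 := n2_ge0 w.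
move: (dot u w) (n2 w) b0 huw cs E1 E2 E3 E4 => a b b0 huw cs E1 E2 E3 E4.
have hb : 0 < b by nra.
pose m := Num.max a 0.
have m1 : a <= m := maxl a 0.
have m2 : 0 <= m := maxr' a 0.
have m3 : m < b / 2 by rewrite gt_max; apply/andP; split; lra.
pose k := (m + b / 2) / 2.
have k1 : a < k by rewrite /k; lra.
have k2 : 0 < k by rewrite /k; lra.
have k3 : k < b / 2 by rewrite /k; lra.
pose M := b - 2 * k * a + k ^+ 2.
have M0 : 0 <= M by rewrite /M; nra.
have M1 : 0 < M + 1 by lra.
pose l := Num.min (Num.min 1 ((b - 2 * k) / (M + 1))) (rho / (2 * (M + 1))).
have l1 : l <= 1 by apply: le_trans (minl _ _) (minl _ _).
have l2 : l * (M + 1) <= b - 2 * k.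
  by rewrite -ler_pdivlMr //; apply: le_trans (minl _ _) (minr' _ _).
have l3 : l * (2 * (M + 1)) <= rho.
  by rewrite -ler_pdivlMr ?mulr_gt0 //; exact: minr' _ _.
have l0 : 0 < l.
  rewrite !lt_min ltr01 !divr_gt0 ?mulr_gt0 //; lra.
exists (l *: w - (l * k) *: u).
rewrite E2 E3 -/M; split; last split.
- have h1 : 0 <= l * (1 - l) * M.
    by rewrite !mulr_ge0 //; [exact: ltW | rewrite subr_ge0].
  have h2 : 0 <= l * M by rewrite mulr_ge0 // ltW.
  lra.
- nra.
- move=> z hzw hz; rewrite E1 -/M; rewrite E4 in hzw.
  have hzu := n2_ge0 (z - u); rewrite E5 in hzu.
  have q1 : 0 <= l * (1 - n2 z + 2 * dot z w - b) by rewrite mulr_ge0 //; lra.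
  have q2 : 0 <= (1 - l) * (1 - n2 z) by rewrite mulr_ge0 //; lra.
  have q3 : 0 <= l * k * (n2 z + 1 - 2 * dot z u) by rewrite !mulr_ge0 //; lra.
  have q4 : 0 <= l * k * (1 - n2 z) by rewrite !mulr_ge0 //; lra.
  have q5 : 0 <= l * (b - 2 * k - l * M) by rewrite mulr_ge0 //; nra.
  lra.
Qed.

Lemma n2_gt0 (u : V) : u != 0 -> 0 < n2 u.
Proof.
move=> hu; rewrite lt_def n2_ge0 andbT; apply/eqP => h; move/eqP: hu; apply.
exact: dot_eq0.
Qed.

Lemma perp_exists (u : V) : (2 <= d)%N -> n2 u = 1 -> exists e, 0 < n2 e /\ dot u e = 0.
Proof.
move=> d2 hu.
case: (pickP (fun k => u ord0 k != 0)) => [k hk|H]; last first.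
  have u0 : u = 0.
    by apply/rowP => k; rewrite mxE; have := H k; move=> /= /negbFE /eqP.
  by move: hu; rewrite u0 n2_0 => /eqP; rewrite eq_sym oner_eq0.
have [l hl] : exists l : 'I_d, l != k.
  case: (eqVneq (val k) 0%N) => hk0.
  - have h1 : (1 < d)%N by [].
    by exists (Ordinal h1); apply/eqP => /(congr1 val) /=; rewrite hk0.
  - have h0 : (0 < d)%N by apply: leq_trans d2.
    by exists (Ordinal h0); apply: contra_neq hk0 => <-.
exists (u ord0 l *: delta_mx ord0 k - u ord0 k *: delta_mx ord0 l).
have dkl : forall (a b : 'I_d), dot (delta_mx ord0 a) (delta_mx ord0 b) = (a == b)%:R.
  by move=> a b; rewrite dot_delta mxE eqxx.
have hkl : (k == l) = false by rewrite eq_sym (negbTE hl).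
split.
- rewrite /n2; dexp; rewrite !dkl eqxx (negbTE hl) hkl.
  have : 0 < u ord0 k ^+ 2 by rewrite exprn_even_gt0 //.
  rewrite eqxx /= ?mulr1 ?mulr0; nra.
- dexp; rewrite !(dotC u) !dot_delta; ring.
Qed.

Lemma addKK (x a b : V) : (x + a) - (x + b) = a - b.
Proof. by rewrite opprD addrACA subrr add0r. Qed.
Lemma addK' (x a : V) : (x + a) - x = a.
Proof. by rewrite addrC addKr. Qed.

Lemma step (ci q0 c' : V) (rho : R) : (2 <= d)%N -> n2 (q0 - ci) = 1 -> c' != ci ->
  0 < rho -> exists q1, n2 (q1 - ci) = 1 /\ n2 (q1 - q0) < rho /\ n2 (q1 - c') <> 1.
Proof.
move=> d2 hq0 hc r0.
case: (eqVneq (n2 (q0 - c')) 1) => hq0c; last first.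
  exists q0; split; [exact: hq0 | split; [by rewrite subrr n2_0 | exact/eqP]].
set u0 := q0 - ci in hq0.
have eq0 : q0 = ci + u0 by rewrite /u0 addrC subrK.
set n := c' - ci.
have ec : c' = ci + n by rewrite /n addrC subrK.
have hn : n != 0 by rewrite /n subr_eq0.
clearbody u0 n; subst q0 c'.
have hn2 := n2_gt0 hn.
have [e [he hue]] := perp_exists d2 hq0.
have heu : dot e u0 = 0 by rewrite dotC.
move: hq0c; rewrite addKK n2B hq0 => hrel.
have ea : n2 n = 2 * dot u0 n by lra.
have hnu : dot n u0 = dot u0 n by rewrite dotC.
have hne : dot n e = dot e n by rewrite dotC.
pose Q (t : R) := ci + (1 + n2 e * t ^+ 2)^-1 *: ((1 - n2 e * t ^+ 2) *: u0 + (2 * t) *: e).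
have Dn : forall t : R, 1 + n2 e * t ^+ 2 != 0.
  by move=> t; rewrite gt_eqF // ltr_pwDl // mulr_ge0 // ?sqr_ge0 // ltW.
have F1 : forall t, n2 (Q t - ci) = 1.
  move=> t; rewrite /Q addK' /n2; dexp.
  rewrite -/(n2 u0) -/(n2 e) hq0 hue heu; field; exact: Dn.
have F2 : forall t, n2 (Q t - (ci + u0)) = 4 * n2 e * t ^+ 2 / (1 + n2 e * t ^+ 2).
  move=> t; rewrite /Q addKK /n2; dexp.
  rewrite -/(n2 u0) -/(n2 e) hq0 hue heu; field; exact: Dn.
have F3 : forall t, n2 (Q t - (ci + n)) =
    1 + 4 * t * (dot u0 n * n2 e * t - dot e n) / (1 + n2 e * t ^+ 2).
  move=> t; rewrite /Q addKK /n2; dexp.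
  rewrite -/(n2 u0) -/(n2 e) -/(n2 n) hq0 hue heu hnu hne ea; field; exact: Dn.
have ha : 0 < dot u0 n by lra.
move: (dot u0 n) (dot e n) (n2 e) he ha Dn F1 F2 F3 => a b s hs ha Dn F1 F2 F3.
pose t0 := Num.min 1 (rho / (8 * (s + 1))).
have t01 : t0 <= 1 := minl _ _.
have h8 : 0 < 8 * (s + 1) by rewrite mulr_gt0 // addr_gt0.
have t02 : t0 * (8 * (s + 1)) <= rho.
  by rewrite -ler_pdivlMr //; exact: minr' _ _.
have t00 : 0 < t0 by rewrite lt_min ltr01 divr_gt0.
have [t [tt0 [t0' hab]]] : exists t, 0 < t /\ t <= t0 /\ a * s * t != b.
  case: (eqVneq (a * s * t0) b) => h.
  - exists (t0 / 2); split; first by rewrite divr_gt0.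
    split; first by lra.
    apply/eqP => h2; rewrite -h in h2.
    have : 0 < a * s * t0 by rewrite !mulr_gt0.
    lra.
  - by exists t0; split => //; split.
exists (Q t); split; first exact: F1.
split.
- have hD : 0 < 1 + s * t ^+ 2 by rewrite ltr_pwDl // mulr_ge0 ?sqr_ge0 // ltW.
  rewrite F2 ltr_pdivrMr //.
  have : 0 <= t * t0 by rewrite mulr_ge0 ?ltW.
  have hts : t ^+ 2 <= t0.
    have : t * t <= t * 1 by apply: ler_wpM2l; [exact: ltW | lra].
    rewrite expr2; lra.
  have : s * t ^+ 2 <= s * t0 by rewrite ler_wpM2l // ltW.
  nra.
- rewrite F3 => E.
  have h : 4 * t * (a * s * t - b) / (1 + s * t ^+ 2) != 0.
    rewrite mulf_neq0 ?invr_neq0 ?Dn // mulf_neq0 ?subr_eq0 // mulf_neq0 //.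
    by rewrite gt_eqF.
  by move/eqP: h; apply; lra.
Qed.

Lemma generic (ci : V) (l : seq V) : (2 <= d)%N -> forall q0 rho,
  n2 (q0 - ci) = 1 -> 0 < rho ->
  exists q, n2 (q - ci) = 1 /\ n2 (q - q0) < rho /\
    forall c', c' \in l -> c' != ci -> n2 (q - c') <> 1.
Proof.
move=> d2; elim: l => [|c' l IH] q0 rho hq0 r0.
  by exists q0; split => //; split => //; rewrite subrr n2_0.
have r4 : 0 < rho / 4 by rewrite divr_gt0.
have [q1 [h1 [h2 h3]]] : exists q1, n2 (q1 - ci) = 1 /\ n2 (q1 - q0) < rho / 4 /\
    (c' != ci -> n2 (q1 - c') <> 1).
  case: (eqVneq c' ci) => hc.
  - by exists q0; split => //; split => //; rewrite subrr n2_0.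
  - have [q1 [h1 [h2 h3]]] := step d2 hq0 hc r4.
    by exists q1; split => //; split.
have [r1 [r10 hr1]] : exists r1, 0 < r1 /\ forall y, n2 (q1 - y) < r1 ->
    c' != ci -> n2 (y - c') <> 1.
  case: (eqVneq c' ci) => hc; first by exists 1; split.
  have e0 : 0 < `|n2 (c' - q1) - 1|.
    by rewrite normr_gt0 subr_eq0 n2N; apply/eqP; exact: h3.
  have [r [r0' Hr]] := n2_cont (c' - q1) e0.
  exists r; split => // y Hy _; rewrite n2N => E.
  by have := Hr _ Hy; rewrite subadd E -normrN opprB ltxx.
have r' : 0 < Num.min r1 (rho / 4) by rewrite lt_min r10.
have [q [hq1 [hq2 hq3]]] := IH q1 _ h1 r'.
exists q; split => //; split.
- have := par (q - q1) (q1 - q0); rewrite addrA subrK.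
  have := lt_le_trans hq2 (minr' _ _); lra.
- move=> c'' /[1!in_cons] /orP [/eqP ->|hin] hne; last exact: hq3.
  apply: hr1 => //; rewrite n2N; exact: lt_le_trans hq2 (minl _ _).
Qed.

Lemma spindle_sub (c0 p q : V) : cball c0 p -> cball c0 q -> spindle p q `<=` cball c0.
Proof.
move=> hp hq y; rewrite /spindle.
have e2 : Defs.edist p q <= 2.
  move/cballP: hp => hp'; move/cballP: hq => hq'.
  have := par (p - c0) (c0 - q); rewrite addrA subrK (n2N p c0) => h.
  have h4 : Num.sqrt (2 ^+ 2) = 2 :> R by rewrite sqrtr_sqr ger0_norm.
  rewrite edistE -h4 ler_sqrt; last by rewrite exprn_ge0.
  rewrite expr2; lra.
rewrite e2; move=> H; exact: H c0 (conj hp hq).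
Qed.

Lemma leval_all n (F : lpoly n) (B : 'I_n -> set V) p :
  (forall j, B j p) -> leval F B p.
Proof. by move=> H; elim: F => [j|F1 H1 F2 H2|F1 H1 F2 H2] /=; [exact: H | split | left]. Qed.

Lemma leval_spindle n (F : lpoly n) (c : 'I_n -> V) p :
  (forall j, cball (c j) p) -> forall q, leval F (fun j => cball (c j)) q ->
  spindle p q `<=` leval F (fun j => cball (c j)).
Proof.
move=> hp; elim: F => [j|F1 H1 F2 H2|F1 H1 F2 H2] q /=.
- by move=> hq; apply: spindle_sub.
- by move=> [h1 h2] y hy; split; [exact: H1 h1 y hy | exact: H2 h2 y hy].
- by move=> [h1|h2] y hy; [left; exact: H1 h1 y hy | right; exact: H2 h2 y hy].
Qed.

Lemma n2Nv (v : V) : n2 (- v) = n2 v.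
Proof. by rewrite /n2 dotNl dotNr opprK. Qed.
End S.

Theorem theorem2 (R : realType) (d n : nat) (F : lpoly n)
  (c : 'I_n -> 'rV[R]_d) :
  (2 <= d)%N ->
  lattice_polynomial F ->
  reduced_along_boundary F c ->
  spindle_kernel (flower_polyhedron F c) = \bigcap_i cball (c i).
Proof.
move=> d2 _ hred.
rewrite /flower_polyhedron.
apply/seteqP; split => p.
- case=> Ap hst i _.
  apply/cballP; rewrite leNgt; apply/negP => hp.
  have [x [r [hx [r0 hpatch]]]] := hred i.
  have hx1 := bd_sphere hx.
  have hx1' : n2 (x - c i) = 1 by rewrite n2N.
  have r2 : 0 < r ^+ 2 by rewrite exprn_gt0.
  have [q [hq [hqx hqo]]] := generic [seq c j | j <- enum 'I_n] d2 hx1' r2.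
  have hq1 : bd (cball (c i)) q by apply: sphere_bd; rewrite n2N.
  have hq2 : Defs.edist x q < r by apply/edist_ltP => //; rewrite n2N.
  have [bq _] := hpatch q (conj hq1 hq2).
  rewrite /flower_polyhedron in bq.
  have hloc : forall j, exists r, 0 < r /\ Loc q (cball (c i)) (cball (c j)) r.
    move=> j; apply: loc_ball.
    case: (eqVneq (c j) (c i)) => hj; first by left; rewrite hj.
    right; rewrite n2N; apply: hqo hj.
    by apply: map_f; rewrite mem_enum.
  have [rho [rho0 hL]] := loc_F F hloc.
  case: hL => [hL|[hL|hL]].
  + have [y [Ay hy]] := bq.1 _ (euc_nbhs q rho0).
    exact: hL y hy Ay.
  + apply: bq.2; apply: filterS (euc_nbhs q rho0) => y hy; exact: hL y hy.
  + have hq0 : n2 (q - q) < rho by rewrite subrr n2_0.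
    have Aq : leval F (fun j => cball (c j)) q.
      by apply/(hL q hq0); apply/cballP; rewrite n2N hq.
    have hsp : spindle p q `<=` leval F (fun j => cball (c j)).
      by rewrite -hst in Aq; case: Aq.
    have hu : n2 (c i - q) = 1 by rewrite n2N.
    have huw : 1 < n2 ((c i - q) - (p - q)) by rewrite opprB addrA subrK.
    have [v [hv1 [hv2 hv3]]] := escape0 hu huw rho0.
    have hy : n2 (q - (q + v)) < rho by rewrite opprD addrA subrr add0r n2Nv.
    have : ~ cball (c i) (q + v).
      by move/cballP; rewrite opprD addrA; lra.
    apply; apply/(hL _ hy); apply: hsp.
    rewrite /spindle; case: ifP => _ // c' [/cballP h1 /cballP h2]; apply/cballP.
    have := hv3 (c' - q); rewrite opprB addrA subrK opprD addrA; apply => //.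
- move=> hp.
  have hp' : forall j, cball (c j) p by move=> j; exact: hp j I.
  split; first exact: leval_all.
  apply/seteqP; split => q; first by case.
  move=> Aq; split => //; exact: leval_spindle.
Qed.
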